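(* For positive integers $n$ and $a$ with $2a\le n$, $S_{\mathcal{Q}}(K_{a,n-a})\ge S_{\mathcal{Q}}(K_{\lfloor n/2\rfloor,\lceil n/2\rceil})$, with equality if and only if $K_{a,n-a}\cong K_{\lfloor n/2\rfloor,\lceil n/2\rceil}$ (i.e. $a=\lfloor n/2\rfloor$).
   Context: For a connected graph $G$ with vertex set $\{v_1,\dots,v_n\}$: $\mathcal{D}(G)=(d_G(v_i,v_j))$ is the distance matrix, $D_i=\sum_j d_G(v_i,v_j)$, $Tr(G)=\mathrm{diag}(D_1,\dots,D_n)$, $\mathcal{Q}(G)=Tr(G)+\mathcal{D}(G)$, and $S_{\mathcal{Q}}(G)$ is the difference between the largest and the least eigenvalue of $\mathcal{Q}(G)$. $K_{a,b}$ is the complete bipartite graph with parts of sizes $a,b$. *)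

(* Defs.v *)
From HB Require Import structures.
From mathcomp Require Import all_boot all_order all_algebra.
From mathcomp Require Import boolp classical_sets reals.
Set Implicit Arguments. Unset Strict Implicit. Unset Printing Implicit Defensive.
Import Order.TTheory GRing.Theory Num.Theory.
Local Open Scope ring_scope.

Fixpoint reach (m : nat) (e : rel 'I_m) (k : nat) (x y : 'I_m) : bool :=
  if k is k'.+1 then [exists z, e x z && reach e k' z y] else x == y.

(* Graph distance d_G(x,y): least k with a walk (hence a path) of length k
   from x to y; for a connected graph on m vertices this is < m. *)
Definition gdist (m : nat) (e : rel 'I_m) (x y : 'I_m) : nat :=
  find (fun k => reach e k x y) (iota 0 m).

Definition distmx (R : realType) (m : nat) (e : rel 'I_m) : 'M[R]_m :=
  \matrix_(i, j) (gdist e i j)%:R.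

Definition transmx (R : realType) (m : nat) (e : rel 'I_m) : 'M[R]_m :=
  diag_mx (\row_i \sum_j distmx R e i j).

Definition distQ (R : realType) (m : nat) (e : rel 'I_m) : 'M[R]_m :=
  transmx R e + distmx R e.

Definition eigset (R : realType) (m : nat) (A : 'M[R]_m) : set R :=
  [set x | eigenvalue A x].

Definition spread (R : realType) (m : nat) (A : 'M[R]_m) : R :=
  sup (eigset A) - inf (eigset A).

Definition SQ (R : realType) (m : nat) (e : rel 'I_m) : R := spread (distQ R e).

(* Complete bipartite graph K_{a,b}: vertices 'I_(a+b), the first a form one part. *)
Definition Kbip (a b : nat) : rel 'I_(a + b) :=
  fun i j => (i < a)%N != (j < a)%N.
Arguments Kbip a b : clear implicits.

(* Main.v *)
Require Import Defs.
From HB Require Import structures.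
From mathcomp Require Import all_boot all_order all_algebra.
From mathcomp Require Import boolp classical_sets reals.
From mathcomp Require Import zify ring lra.
Import Order.TTheory GRing.Theory Num.Theory.
Local Open Scope ring_scope.

Lemma sup_eq (R : realType) (E : set R) M : E M -> (forall x, E x -> x <= M) -> sup E = M.
Proof.
move=> EM ub; apply/le_anti/andP; split.
  by apply: ge_sup; [exists M|].
by apply: ub_le_sup => //; exists M.
Qed.

Lemma inf_eq (R : realType) (E : set R) M : E M -> (forall x, E x -> M <= x) -> inf E = M.
Proof.
move=> EM lb; apply/le_anti/andP; split.
  by apply: ge_inf => //; exists M.
by apply: lb_le_inf; [exists M|].
Qed.

Lemma sumL0 (R : realType) m : (2 <= m)%N ->
  \sum_(i < m) (if (i:nat) == 0%N then 1 else if (i:nat) == 1%N then -1 else 0 : R) = 0.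
Proof.
case: m => [|[|m]] // _.
rewrite !big_ord_recl /= big1 ?addr0 ?subrr // => i _.
Qed.

Lemma sqrt_le (R : realType) (x y : R) : 0 <= x -> 0 <= y -> x <= y ^+ 2 -> Num.sqrt x <= y.
Proof.
move=> hx hy hxy; rewrite -[leRHS](ger0_norm hy) -sqrtr_sqr ler_sqrt //.
exact: sqr_ge0.
Qed.

Lemma sqrt_ge (R : realType) (x y : R) : 0 <= y -> y ^+ 2 <= x -> y <= Num.sqrt x.
Proof.
move=> hy hxy; rewrite -[leLHS](ger0_norm hy) -sqrtr_sqr ler_sqrt //.
exact: le_trans (sqr_ge0 y) hxy.
Qed.

Section K.
Variables (a b : nat).
Hypotheses (ha : (0 < a)%N) (hb : (0 < b)%N).

Lemma gdistK (i j : 'I_(a + b)) :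
  gdist (Kbip a b) i j = if i == j then 0%N else if (i < a)%N == (j < a)%N then 2%N else 1%N.
Proof.
rewrite /gdist.
have E : (a + b = (a + b - 2).+2)%N by lia.
rewrite [X in iota _ X]E /=.
case: eqP => // /eqP ne.
have r1 : [exists z, Kbip a b i z && (z == j)] = Kbip a b i j.
  apply/existsP/idP => [[z /andP[h /eqP <-]]|h] //; by exists j; rewrite h /=.
rewrite r1 /Kbip.
case s: ((i < a)%N == (j < a)%N) => /=; last by [].
move/eqP: s => s.
have E2 : (a + b - 2 = (a + b - 3).+1)%N.
  case: (ltnP (i:nat) a) s => hi s.
  - have hj : (j < a)%N by rewrite -s.
    have : (i:nat) != j by [].
    lia.
  - have hj : (a <= j)%N by move: hi s; case: ltnP.
    have : (i:nat) != j by [].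
    have := ltn_ord i; have := ltn_ord j; lia.
rewrite E2 /=.
suff -> : [exists z : 'I_(a+b), ((i < a)%N != (z < a)%N) && reach (Kbip a b) 1 z j] by [].
case: (ltnP (i:nat) a) s => hi s.
- apply/existsP; exists (rshift a (Ordinal hb)) => /=.
  rewrite addn0 ltnn /=; apply/existsP; exists j.
  by rewrite eqxx andbT /Kbip /= addn0 ltnn -s.
- apply/existsP; exists (lshift b (Ordinal ha)) => /=.
  rewrite ha /=; apply/existsP; exists j.
  by rewrite eqxx andbT /Kbip /= ha -s.
Qed.

Variable R : realType.

Definition SA (f : 'I_(a+b) -> R) := \sum_(i < a) f (lshift b i).
Definition SB (f : 'I_(a+b) -> R) := \sum_(k < b) f (rshift a k).

Lemma sum_d (f : 'I_(a+b) -> R) j :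
  \sum_i f i * (gdist (Kbip a b) i j)%:R =
  (if (j < a)%N then 2 * SA f + SB f else SA f + 2 * SB f) - 2 * f j.
Proof.
have E : forall i, f i * (gdist (Kbip a b) i j)%:R =
   f i * (if (i < a)%N == (j < a)%N then 2 else 1) - (if i == j then 2 * f i else 0).
  move=> i; rewrite gdistK; case: eqP => [->|_]; first by rewrite eqxx mulr0 mulrC subrr.
  by case: eqP => _; rewrite subr0.
rewrite (eq_bigr _ (fun i _ => E i)) sumrB -big_mkcond big_pred1_eq.
congr (_ - _).
rewrite big_split_ord /SA /SB /=.
have L : forall i : 'I_a, (lshift b i < a)%N by move=> i /=.
have Rr : forall k : 'I_b, (rshift a k < a)%N = false by move=> k /=; rewrite ltnNge leq_addr.
under eq_bigr => i _ do rewrite L.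
under [X in _ + X]eq_bigr => k _ do rewrite Rr.
rewrite -!big_distrl /=.
by case: (j < a)%N => /=; rewrite !mulr1 mulrC // [_ * SB f]mulrC.
Qed.

Lemma SA1 : SA (fun _ => 1) = a%:R.
Proof. by rewrite /SA sumr_const card_ord. Qed.
Lemma SB1 : SB (fun _ => 1) = b%:R.
Proof. by rewrite /SB sumr_const card_ord. Qed.

Definition alpha : R := 2 * a%:R + b%:R - 4.
Definition beta : R := a%:R + 2 * b%:R - 4.

Lemma vQ (v : 'rV[R]_(a+b)) j :
  (v *m distQ R (Kbip a b)) 0 j =
  (if (j < a)%N then alpha * v 0 j + 2 * SA (v 0) + SB (v 0)
   else beta * v 0 j + SA (v 0) + 2 * SB (v 0)).
Proof.
rewrite /distQ mulmxDr mxE /transmx mul_mx_diag !mxE.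
have -> : \sum_j0 distmx R (Kbip a b) j j0 = \sum_i 1 * (gdist (Kbip a b) i j)%:R.
  apply: eq_bigr => i _; rewrite mxE mul1r !gdistK eq_sym.
  by case: eqP => // _; rewrite eq_sym.
rewrite sum_d SA1 SB1.
under eq_bigr => i _ do rewrite mxE.
rewrite sum_d /alpha /beta.
case: (j < a)%N; ring.
Qed.

Definition pp : R := alpha + 2 * a%:R.
Definition qq : R := beta + 2 * b%:R.

Lemma eig_cases l : eigenvalue (distQ R (Kbip a b)) l ->
  (l = alpha /\ (2 <= a)%N) \/ (l = beta /\ (2 <= b)%N) \/
  (l - pp) * (l - qq) = a%:R * b%:R.
Proof.
case/eigenvalueP => v hv vn0.
have Ej : forall j, l * v 0 j = (if (j < a)%N then alpha * v 0 j + 2 * SA (v 0) + SB (v 0)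
   else beta * v 0 j + SA (v 0) + 2 * SB (v 0)).
  by move=> j; rewrite -vQ hv mxE.
set sA := SA (v 0) in Ej *; set sB := SB (v 0) in Ej *.
have EA : forall i : 'I_a, l * v 0 (lshift b i) = alpha * v 0 (lshift b i) + 2 * sA + sB.
  by move=> i; rewrite Ej /= ltn_ord.
have EB : forall k : 'I_b, l * v 0 (rshift a k) = beta * v 0 (rshift a k) + sA + 2 * sB.
  by move=> k; rewrite Ej /= ltnNge leq_addr.
have SumA : l * sA = alpha * sA + a%:R * (2 * sA + sB).
  rewrite /sA /SA big_distrr /= (eq_bigr _ (fun i _ => EA i)) big_split /= big_split /=.
  by rewrite sumr_const card_ord -big_distrr /= sumr_const card_ord -/(SA (v 0)) -/sA mulrDr !mulr_natl addrA.
have SumB : l * sB = beta * sB + b%:R * (sA + 2 * sB).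
  rewrite /sB /SB big_distrr /= (eq_bigr _ (fun i _ => EB i)) big_split /= big_split /=.
  by rewrite sumr_const card_ord -big_distrr /= sumr_const card_ord -/(SB (v 0)) -/sB mulrDr !mulr_natl addrA.
have a0 : a%:R != 0 :> R by rewrite pnatr_eq0 -lt0n.
have b0 : b%:R != 0 :> R by rewrite pnatr_eq0 -lt0n.
have sAdef : sA = SA (v 0) by [].
have sBdef : sB = SB (v 0) by [].
clearbody sA sB.
case/boolP: (sA == 0) => [/eqP sA0|sAn0].
  case/boolP: (sB == 0) => [/eqP sB0|sBn0]; last first.
    exfalso; move: SumA; rewrite sA0 !mulr0 !add0r => /eqP.
    by rewrite eq_sym mulf_eq0 (negPf a0) (negPf sBn0).
  have [j hj] : exists j, v 0 j != 0.
    case/boolP: [exists j, v 0 j != 0] => [/existsP//|/existsPn H].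
    by case/eqP: vn0; apply/rowP => j; move: (H j); rewrite negbK mxE => /eqP.
  move: (Ej j); rewrite sA0 sB0 !mulr0 !addr0.
  case: (ltnP j a) => ja H.
  - left; split; first by apply: (mulIf hj).
    case: (ltnP 1 a) => // a1; exfalso.
    have a1' : a = 1%N by apply/eqP; rewrite eqn_leq a1 ha.
    move: sA0; rewrite sAdef /SA (bigD1 (Ordinal ja)) //= big1 ?addr0.
      have -> : lshift b (Ordinal ja) = j by apply/val_inj.
      by move/eqP; rewrite (negPf hj).
    move=> i; rewrite -val_eqE /= => ne; exfalso; move: ne.
    by move/eqP; apply; have := ltn_ord i; lia.
  - right; left; split; first by apply: (mulIf hj).
    case: (ltnP 1 b) => // b1; exfalso.
    have b1' : b = 1%N by apply/eqP; rewrite eqn_leq b1 hb.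
    have jb : (j - a < b)%N by have := ltn_ord j; lia.
    move: sB0; rewrite sBdef /SB (bigD1 (Ordinal jb)) //= big1 ?addr0.
      have -> : rshift a (Ordinal jb) = j by apply/val_inj => /=; lia.
      by move/eqP; rewrite (negPf hj).
    move=> i; rewrite -val_eqE /= => ne; exfalso; move: ne.
    by move/eqP; apply; have := ltn_ord i; have := ltn_ord j; lia.
right; right.
apply: (mulIf sAn0).
have : (l - pp) * sA = a%:R * sB by rewrite /pp; move: SumA; lra.
have : (l - qq) * sB = b%:R * sA by rewrite /qq; move: SumB; lra.
move=> h1 h2.
transitivity ((l - qq) * ((l - pp) * sA)); first by ring.
rewrite h2; transitivity (a%:R * ((l - qq) * sB)); first by ring.
by rewrite h1; ring.
Qed.

Lemma eig_root l : (l - pp) * (l - qq) = a%:R * b%:R ->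
  eigenvalue (distQ R (Kbip a b)) l.
Proof.
move=> H; apply/eigenvalueP.
exists (\row_j (if (j < a)%N then b%:R else l - pp)).
  have SAv : SA ((\row_j (if (j < a)%N then b%:R else l - pp)) 0) = a%:R * b%:R.
    rewrite /SA (eq_bigr (fun _ => b%:R)) ?sumr_const ?card_ord ?mulr_natl //.
    by move=> i _; rewrite mxE /= ltn_ord.
  have SBv : SB ((\row_j (if (j < a)%N then b%:R else l - pp)) 0) = b%:R * (l - pp).
    rewrite /SB (eq_bigr (fun _ => l - pp)) ?sumr_const ?card_ord ?mulr_natl //.
    by move=> i _; rewrite mxE /= ltnNge leq_addr.
  apply/rowP => j; rewrite vQ SAv SBv !mxE.
  move: H; rewrite /pp /qq.
  case: (j < a)%N => H; lra.
apply/negP => /eqP v0.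
have := congr1 (fun M : 'rV[R]_(a+b) => M 0 (lshift b (Ordinal ha))) v0.
rewrite !mxE /= ha; apply/eqP; rewrite pnatr_eq0 -lt0n //.
Qed.

Definition vec c : 'rV[R]_(a+b) :=
  \row_j (if (j:nat) == c then 1 else if (j:nat) == c.+1 then -1 else 0).

Lemma eig_alpha : (2 <= a)%N -> eigenvalue (distQ R (Kbip a b)) alpha.
Proof.
move=> a2; apply/eigenvalueP; exists (vec 0).
  have SAv : SA ((vec 0) 0) = 0.
    rewrite /SA -[RHS](sumL0 R a a2); apply: eq_bigr => i _; by rewrite mxE.
  have SBv : SB ((vec 0) 0) = 0.
    rewrite /SB big1 // => i _; rewrite mxE /=.
    have -> : (a + i == 0)%N = false by lia.
    by have -> : (a + i == 1)%N = false by lia.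
  apply/rowP => j; rewrite vQ SAv SBv !mxE.
  case: ltnP => ja; first by rewrite mulr0 !addr0.
  have -> : (j == 0 :> nat) = false by lia.
  have -> : (j == 1 :> nat) = false by lia.
  by rewrite !mulr0 !addr0.
apply/negP => /eqP v0.
have := congr1 (fun M : 'rV[R]_(a+b) => M 0 (lshift b (Ordinal ha))) v0.
by rewrite !mxE /= => /eqP; rewrite oner_eq0.
Qed.

Lemma eig_beta : (2 <= b)%N -> eigenvalue (distQ R (Kbip a b)) beta.
Proof.
move=> b2; apply/eigenvalueP; exists (vec a).
  have SBv : SB ((vec a) 0) = 0.
    rewrite /SB -[RHS](sumL0 R b b2); apply: eq_bigr => i _; rewrite mxE /=.
    rewrite -[X in (_ == X)%N]addn0 eqn_add2l -addn1 eqn_add2l //.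
  have SAv : SA ((vec a) 0) = 0.
    rewrite /SA big1 // => i _; rewrite mxE /=.
    have := ltn_ord i => ia.
    have -> : (i == a :> nat) = false by lia.
    by have -> : (i == a.+1 :> nat) = false by lia.
  apply/rowP => j; rewrite vQ SAv SBv !mxE.
  case: ltnP => ja; last by rewrite mulr0 !addr0.
  have -> : (j == a :> nat) = false by lia.
  have -> : (j == a.+1 :> nat) = false by lia.
  by rewrite !mulr0 !addr0.
apply/negP => /eqP v0.
have := congr1 (fun M : 'rV[R]_(a+b) => M 0 (rshift a (Ordinal hb))) v0.
by rewrite !mxE /= addn0 eqxx => /eqP; rewrite oner_eq0.
Qed.

Definition DD : R := (pp - qq) ^+ 2 + 4 * a%:R * b%:R.
Definition rr : R := Num.sqrt DD.
Definition lp : R := (pp + qq + rr) / 2.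
Definition lm : R := (pp + qq - rr) / 2.

Lemma DD_ge0 : 0 <= DD.
Proof. rewrite /DD; apply: addr_ge0; [exact: sqr_ge0| by rewrite !mulr_ge0 ?ler0n]. Qed.

Lemma rr_ge0 : 0 <= rr. Proof. exact: sqrtr_ge0. Qed.
Lemma rr_sq : rr ^+ 2 = DD. Proof. exact: sqr_sqrtr DD_ge0. Qed.

Lemma root_iff l : (l - pp) * (l - qq) = a%:R * b%:R <-> l = lp \/ l = lm.
Proof.
have E : (l - pp) * (l - qq) - a%:R * b%:R = ((2 * l - pp - qq) ^+ 2 - rr ^+ 2) / 4.
  by rewrite rr_sq /DD; field.
split.
  move=> H; move: E; rewrite H subrr => /esym /eqP.
  rewrite mulf_eq0 invr_eq0 (_ : (4:R) == 0 = false); last by apply/negbTE; rewrite pnatr_eq0.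
  rewrite orbF subr_sqr mulf_eq0 => /orP [] /eqP h; [left|right]; rewrite /lp /lm; lra.
move=> H; apply/eqP; rewrite -subr_eq0 E.
by case: H => ->; apply/eqP; rewrite /lp /lm; field.
Qed.

Lemma eig_iff l : eigenvalue (distQ R (Kbip a b)) l <->
  (l = alpha /\ (2 <= a)%N) \/ (l = beta /\ (2 <= b)%N) \/ l = lp \/ l = lm.
Proof.
split.
  case/eig_cases => [h|[h|h]]; [by left|by right; left|by right; right; apply/root_iff].
case => [[-> ?]|[[-> ?]|h]]; [exact: eig_alpha|exact: eig_beta|].
by apply: eig_root; apply/root_iff.
Qed.

Lemma rr_ge_diff : pp - qq <= rr /\ qq - pp <= rr.
Proof.
have h1 : (pp - qq) ^+ 2 <= DD by rewrite /DD lerDl !mulr_ge0 ?ler0n.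
split.
- case: (lerP 0 (pp - qq)) => h; [exact: sqrt_ge | have := rr_ge0; lra].
- case: (lerP 0 (qq - pp)) => h; [apply: sqrt_ge => //; by rewrite -sqrrN opprB | have := rr_ge0; lra].
Qed.

Lemma sup_val : sup (eigset (distQ R (Kbip a b))) = lp.
Proof.
apply: sup_eq; first by apply/eig_iff; right; right; left.
move=> x /eig_iff.
have [h1 h2] := rr_ge_diff; have h3 := rr_ge0.
have ha' : 0 <= a%:R :> R by rewrite ler0n.
have hb' : 0 <= b%:R :> R by rewrite ler0n.
move: h1 h2; rewrite /lp /lm /pp /qq.
by move=> h1 h2 [[-> _]|[[-> _]|[->|->]]]; lra.
Qed.

Lemma DDe : DD = 9 * (a%:R - b%:R) ^+ 2 + 4 * a%:R * b%:R.
Proof. by rewrite /DD /pp /qq /alpha /beta; ring. Qed.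

Lemma SQ_A : (2 <= a)%N -> (a <= b)%N -> SQ R (Kbip a b) = lp - alpha.
Proof.
move=> a2 ab; rewrite /SQ /spread sup_val; congr (_ - _).
have aR : 2 <= a%:R :> R by rewrite (ler_nat R 2 a).
have abR : a%:R <= b%:R :> R by rewrite ler_nat.
have h3 := rr_ge0.
have hr : rr <= a%:R + 3 * b%:R.
  apply: sqrt_le; [exact: DD_ge0|lra|].
  rewrite DDe; nra.
apply: inf_eq; first by apply/eig_iff; left.
move=> x /eig_iff; move: hr; rewrite /lp /lm /pp /qq /alpha /beta.
by move=> hr [[-> _]|[[-> _]|[->|->]]]; lra.
Qed.

Lemma SQ_B : (a = 1)%N -> (3 <= b)%N -> SQ R (Kbip a b) = rr.
Proof.
move=> a1 b3; rewrite /SQ /spread sup_val.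
have aR : a%:R = 1 :> R by rewrite a1.
have bR : 3 <= b%:R :> R by rewrite (ler_nat R 3 b).
have h3 := rr_ge0.
have hr : 3 * a%:R + b%:R <= rr.
  apply: sqrt_ge; [lra|].
  rewrite DDe aR; nra.
suff -> : inf (eigset (distQ R (Kbip a b))) = lm by rewrite /lp /lm; field.
apply: inf_eq; first by apply/eig_iff; right; right; right.
move=> x /eig_iff; move: hr; rewrite /lp /lm /pp /qq /alpha /beta.
move=> hr [[-> h]|[[-> _]|[->|->]]]; try lra.
by rewrite a1 in h.
Qed.
End K.

Definition Dv {R : realType} (x y : R) := 9 * (x - y) ^+ 2 + 4 * x * y.

Lemma valA (R : realType) a b : (2 <= a)%N -> (a <= b)%N ->
  SQ R (Kbip a b) = (a%:R + 3 * b%:R + Num.sqrt (Dv a%:R b%:R)) / 2.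
Proof.
move=> a2 ab.
have ha : (0 < a)%N by lia.
have hb : (0 < b)%N by lia.
rewrite (@SQ_A a b ha hb R) // /lp /rr (DDe a b R) /Dv /pp /qq /alpha /beta; field. by [].
Qed.

Lemma valB (R : realType) b : (3 <= b)%N ->
  SQ R (Kbip 1 b) = Num.sqrt (Dv (1 : R) b%:R).
Proof.
move=> b3.
have hb : (0 < b)%N by lia.
by rewrite (@SQ_B 1 b (ltnSn 0) hb R) // /rr (DDe 1 b R) /Dv.
Qed.

Lemma sqrt_gt (R : realType) (x y : R) : 0 <= y -> y ^+ 2 < x -> y < Num.sqrt x.
Proof.
move=> hy hxy; rewrite -[ltLHS](ger0_norm hy) -sqrtr_sqr ltr_sqrt //.
exact: le_lt_trans (sqr_ge0 y) hxy.
Qed.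

Theorem corollary4p4 (R : realType) (n a : nat) :
  (0 < a)%N -> (0 < n)%N -> (2 * a <= n)%N ->
  SQ R (Kbip (n./2) (uphalf n)) <= SQ R (Kbip a (n - a)) /\
  (SQ R (Kbip a (n - a)) = SQ R (Kbip (n./2) (uphalf n)) <-> a = n./2).
Proof.
move=> ha hn h2a.
have hmu : (n./2 + uphalf n = n)%N.
  by have := odd_double_half n; rewrite uphalf_half -muln2; lia.
have hmu2 : (n./2 <= uphalf n)%N by rewrite uphalf_half; lia.
have ham : (a <= n./2)%N by have := odd_double_half n; rewrite -muln2; lia.
case: (ltnP a n./2) => am; last first.
  have e : a = n./2 by apply/eqP; rewrite eqn_leq ham am.
  subst a.
  have -> : (n - n./2 = uphalf n)%N by lia.
  by split => //; split.
suff H : SQ R (Kbip (n./2) (uphalf n)) < SQ R (Kbip a (n - a)).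
  split; first exact: ltW.
  split => [E|E]; last by lia.
  by move: H; rewrite E ltxx.
have m2 : (2 <= n./2)%N by lia.
rewrite (@valA R _ _ m2 hmu2).
set M := (n./2)%:R : R; set U := (uphalf n)%:R : R.
have M2 : 2 <= M by rewrite /M (ler_nat R 2).
have MU : M <= U by rewrite /M /U ler_nat.
have y0 := sqrtr_ge0 (Dv M U).
case: (ltnP 1 a) => a2.
  have ab : (a <= n - a)%N by lia.
  rewrite (@valA R _ _ a2 ab).
  have -> : (n - a)%:R = M + U - a%:R :> R.
    by rewrite /M /U -natrD hmu natrB //; lia.
  have A2 : 2 <= a%:R :> R by rewrite (ler_nat R 2).
  have AM : a%:R + 1 <= M by rewrite /M -(natrD R a 1) ler_nat addn1.
  have hD : Num.sqrt (Dv M U) <= Num.sqrt (Dv a%:R (M + U - a%:R)).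
    rewrite ler_sqrt; last by rewrite /Dv; nra.
    rewrite /Dv; nra.
  lra.
have a1 : a = 1%N by lia.
subst a.
rewrite (@valB R (n - 1)%N); last by lia.
have -> : (n - 1)%:R = M + U - 1 :> R.
  by rewrite /M /U -natrD hmu natrB //; lia.
set x := Num.sqrt (Dv 1 _).
have hx : 3 * (M + U) - 6 < x.
  apply: sqrt_gt; first lra.
  rewrite /Dv; nra.
have hy : Num.sqrt (Dv M U) <= 3 * (M + U) - 8.
  apply: sqrt_le; [rewrite /Dv; nra|lra|].
  rewrite /Dv; nra.
lra.
Qed.
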